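(* Let $k\ge1$. Conditional on the attack cycle starting with SS, the probability that it ends with exactly $k$ consecutive letters H is $pq^{k-1}$.
   Context: Honest hashrate $p$, attacker hashrate $q$, $p+q=1$, $0<q<p$. The attack cycles starting with SS are the words $SSwH$ over $\{S,H\}$ with $w$ a Dyck word (S up-step, H down-step: equally many S and H, every prefix with at least as many S as H), with $\mathbb{P}[SSwH]=q^2p(pq)^{|w|}$ where $|w|$ is half the length of $w$. *)

(* Defs.v *)
From mathcomp Require Import all_boot all_order all_algebra.
From mathcomp Require Import all_classical all_reals all_analysis.
Set Implicit Arguments. Unset Strict Implicit. Unset Printing Implicit Defensive.
Import Order.TTheory GRing.Theory Num.Theory numFieldNormedType.Exports.
Local Open Scope ring_scope.

(* Words over {S,H} encoded as seq bool: true = S (up-step), false = H (down-step). *)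

Definition dyck (w : seq bool) : bool :=
  (count id w == count negb w)%N &&
  all (fun i => count negb (take i w) <= count id (take i w))%N (iota 0 (size w).+1).

Definition cycle_SS (w : seq bool) : seq bool := [:: true; true] ++ w ++ [:: false].

Definition trailH (c : seq bool) : nat := find id (rev c).

(* Total probability of the attack cycles S S w H (w Dyck word of half-length n)
   satisfying the event E; each has probability q^2 p (pq)^n. *)
Definition cyc_mass (R : realType) (p q : R) (E : seq bool -> bool) (n : nat) : R :=
  \sum_(w : (n.*2).-tuple bool | dyck w && E (cycle_SS w)) (q ^+ 2 * p * (p * q) ^+ n).

(* Probability of the event E (intersected with "cycle starts with SS"). *)
Definition prob_SS (R : realType) (p q : R) (E : seq bool -> bool) : R :=
  limn (series (cyc_mass p q E) : R^nat).

(* Main.v *)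
Require Import Defs.
From mathcomp Require Import all_boot all_order all_algebra.
From mathcomp Require Import all_classical all_reals all_analysis.
From mathcomp Require Import zify ring lra.
Import Order.TTheory GRing.Theory Num.Theory numFieldNormedType.Exports.
Local Open Scope ring_scope.

Fixpoint walk (h : nat) (s : seq bool) : option nat :=
  match s with
  | [::] => Some h
  | true :: s' => walk h.+1 s'
  | false :: s' => if h is h'.+1 then walk h' s' else None
  end.

Lemma walk_cat h s t : walk h (s ++ t) = obind (fun h' => walk h' t) (walk h s).
Proof. by elim: s h => [|[] s IH] h //=; case: h. Qed.

Lemma walk_lift h h' d s : walk h s = Some h' -> walk (h + d) s = Some (h' + d).
Proof.
elim: s h h' => [|[] s IH] h h' /=; first by case=> ->.
  by move/IH; rewrite addSn.
by case: h => [//|h] /= /IH.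
Qed.

Lemma walk_lift1 s m : walk 0 s = Some m -> walk 1 s = Some m.+1.
Proof. by move=> H; rewrite -[m.+1]addn1 -[1%N]/(0+1)%N; apply: walk_lift. Qed.

Definition Pw h s := all (fun i => count negb (take i s) <= h + count id (take i s))%N
   (iota 0 (size s).+1).

Lemma Pw_cons h x s : Pw h (x :: s) =
  all (fun i => count negb (take i.+1 (x :: s)) <= h + count id (take i.+1 (x :: s)))%N (iota 0 (size s).+1).
Proof.
rewrite /Pw (_ : iota 0 (size (x :: s)).+1 = [:: 0%N] ++ map (addn 1) (iota 0 (size s).+1)); last by rewrite -iotaDl.
rewrite all_cat all_map (_ : all _ [:: 0%N] = true); last by [].
by rewrite andTb; apply: eq_all => i.  
Qed.

Lemma Pw_true h s : Pw h (true :: s) = Pw h.+1 s.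
Proof. by rewrite Pw_cons /Pw; apply: eq_all => i /=; rewrite add0n addnS addSn. Qed.

Lemma Pw_false h s : Pw h.+1 (false :: s) = Pw h s.
Proof. by rewrite Pw_cons /Pw; apply: eq_all => i /=; rewrite add0n addSn ltnS. Qed.

Lemma Pw_false0 s : Pw 0 (false :: s) = false.
Proof. apply/negP; rewrite Pw_cons => /allP /(_ 0%N); by rewrite mem_iota /= take0 => /(_ isT); rewrite /= !add0n addn0. Qed.

Lemma walkE h s : walk h s = if Pw h s then Some (h + count id s - count negb s)%N else None.
Proof.
elim: s h => [|[] s IH] h; first by rewrite /Pw /= addn0 subn0.
  rewrite /= Pw_true IH; congr (if _ then Some _ else _); lia.
case: h => [|h]; first by rewrite Pw_false0.
rewrite Pw_false /= IH; congr (if _ then Some _ else _); lia.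
Qed.

Lemma dyckE s : dyck s = (walk 0 s == Some 0%N).
Proof.
rewrite walkE /dyck -/(Pw 0 s).
case P: (Pw 0 s); last by rewrite andbF.
rewrite andbT.
have : (count negb s <= count id s)%N.
  move/allP: P => /(_ (size s)); rewrite mem_iota take_size add0n; apply.
  by rewrite ltnS leqnn.
move=> H; apply/eqP/eqP; first by move=> ->; rewrite subnn.
by case; lia.
Qed.

Lemma walk_lastret s h : walk 0 s = Some h.+1 ->
  exists u r, [/\ s = u ++ true :: r, walk 0 u = Some 0%N & walk 0 r = Some h].
Proof.
elim/last_ind: s h => [|s0 x IH] h //.
rewrite -cats1 walk_cat.
case E: (walk 0 s0) => [m|] //=.
case: x => /=.
  case=> <-{h}; case: m E => [|m] E.
    by exists s0, [::].
  have [u [r [-> Hu Hr]]] := IH _ E.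
  exists u, (r ++ [:: true]); split => //; first by rewrite -catA.
  by rewrite walk_cat Hr.
case: m E => [//|m] E [Em]; subst m.
have [u [r [-> Hu Hr]]] := IH _ E.
exists u, (r ++ [:: false]); split => //; first by rewrite -catA.
by rewrite walk_cat Hr.
Qed.

Definition glue (u v : seq bool) := u ++ true :: v ++ [:: false].

Lemma decomp_ex w : dyck w -> w != [::] ->
  exists u v, [/\ w = glue u v, dyck u & dyck v].
Proof.
rewrite dyckE; case/lastP: w => [//|w0 x] /eqP + _.
rewrite -cats1 walk_cat.
case E: (walk 0 w0) => [m|] //=.
case: x => /=; first by [].
case: m E => [//|m] E [Em]; subst m.
have [u [r [-> Hu Hr]]] := @walk_lastret _ _ E.
by exists u, r; rewrite /glue !dyckE Hu Hr -catA.
Qed.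

Lemma glue_dyck u v : dyck u -> dyck v -> dyck (glue u v).
Proof.
rewrite !dyckE /glue => /eqP Hu /eqP Hv.
rewrite walk_cat Hu /= walk_cat (walk_lift1 _ _ Hv) /=.
by [].
Qed.

Lemma walk_prefix h s t m : walk h (s ++ t) = Some m -> exists m', walk h s = Some m'.
Proof. by rewrite walk_cat; case: (walk h s) => [m'|] //= _; exists m'. Qed.

Lemma glue_lt u v u' v' : dyck u -> dyck v -> dyck u' ->
  (size u < size u')%N -> glue u v = glue u' v' -> False.
Proof.
rewrite !dyckE => /eqP Hu /eqP Hv /eqP Hu' Hlt E.
have Hs : (size u' + size v' = size u + size v)%N.
  by move: (congr1 size E); rewrite /glue !size_cat /= !size_cat /=; lia.
have Hd : u' = take (size u') (glue u v) by rewrite E /glue take_size_cat.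
rewrite /glue take_cat ltnNge (ltnW Hlt) /= in Hd.
case Hd' : (size u' - size u)%N Hd => [|d]; first by lia.
rewrite /= take_cat.
have Hdv : (d < size v)%N by lia.
rewrite Hdv => Hu'E.
have [m Hm] : exists m, walk 0 (take d v) = Some m.
  by apply: (@walk_prefix _ _ (drop d v) 0%N); rewrite cat_take_drop.
move: Hu'; rewrite Hu'E walk_cat Hu /= (walk_lift1 _ _ Hm).
by [].
Qed.

Lemma glue_inj u v u' v' : dyck u -> dyck v -> dyck u' -> dyck v' ->
  glue u v = glue u' v' -> u = u' /\ v = v'.
Proof.
move=> Hu Hv Hu' Hv' E.
case: (ltngtP (size u) (size u')) => H.
- by case: (@glue_lt u v u' v' Hu Hv Hu' H E).
- by case: (@glue_lt u' v' u v Hu' Hv' Hu H (esym E)).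
move: (E); rewrite /glue => /eqP; rewrite eqseq_cat // => /andP[/eqP -> /eqP [] /eqP].
rewrite eqseq_cat; first by case/andP => /eqP -> _.
by move: (congr1 size E); rewrite /glue !size_cat /= !size_cat /= H; lia.
Qed.

Lemma trailH_glue u v : trailH (glue u v) = (trailH v).+1.
Proof.
rewrite /glue /trailH -cat_cons catA cats1 rev_rcons /= rev_cat rev_cons cat_rcons find_cat /=.
by case: ifP => // /negbT H; rewrite (hasNfind H) addn0.
Qed.

Lemma dyck_size u : dyck u -> size u = (count id u).*2.
Proof.
move=> /andP[/eqP H _]; rewrite -addnn {2}H.
by rewrite -(count_predC id u) /predC.
Qed.

Definition Lw m : seq (seq bool) := map val (index_enum (m.-tuple bool)).

Lemma mem_Lw m s : (s \in Lw m) = (size s == m).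
Proof.
apply/mapP/idP => [[t _ ->]|H]; first by rewrite size_tuple.
by exists (Tuple H); rewrite ?mem_index_enum.
Qed.

Lemma Lw_uniq m : uniq (Lw m).
Proof. by rewrite map_inj_uniq ?index_enum_uniq //; apply: val_inj. Qed.

Lemma sum_tuple (R : realType) m (P : pred (seq bool)) (c : R) :
  \sum_(w : m.-tuple bool | P w) c = c *+ count P (Lw m).
Proof. by rewrite big_const_seq iter_addr_0 /Lw count_map. Qed.

Lemma count_perm m (P : pred (seq bool)) L : uniq L ->
  (forall s, (s \in L) = (size s == m) && P s) -> count P (Lw m) = size L.
Proof.
move=> UL HL; rewrite -size_filter; apply: perm_size; apply: uniq_perm.
- by rewrite filter_uniq // Lw_uniq.
- by [].
by move=> s; rewrite mem_filter mem_Lw HL andbC.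
Qed.

Definition cnt j n := count (fun w => dyck w && (j <= trailH w)%N) (Lw n.*2).

Lemma cnt0 j : cnt j 0 = (j == 0%N).
Proof.
rewrite /cnt (@count_perm 0 _ (if j == 0%N then [:: [::]] else [::])).
- by case: (j == 0%N).
- by case: (j == 0%N).
move=> s; case: s => [|x s] /=.
  by rewrite /dyck /trailH /=; case: j => [|j] //=.
by case: (j == 0%N); rewrite ?inE.
Qed.

Lemma cnt_rec j n : cnt j.+1 n.+1 = (\sum_(0 <= a < n.+1) cnt 0 a * cnt j (n - a))%N.
Proof.
pose DA a := [seq w <- Lw a.*2 | dyck w && (0 <= trailH w)%N].
pose DB a := [seq w <- Lw a.*2 | dyck w && (j <= trailH w)%N].
pose PP a := [seq (u, v) | u <- DA a, v <- DB (n - a)%N].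
pose L := [seq glue uv.1 uv.2 | a <- iota 0 n.+1, uv <- PP a].
have -> : (\sum_(0 <= a < n.+1) cnt 0 a * cnt j (n - a))%N = size L.
  rewrite size_allpairs_dep sumnE big_map /index_iota subn0.
  by apply: eq_bigr => a _; rewrite size_allpairs !size_filter.
apply: count_perm.
- apply: allpairs_uniq_dep.
  + exact: iota_uniq.
  + move=> a _; apply: allpairs_uniq; rewrite ?filter_uniq ?Lw_uniq //.
    by move=> [u v] [u' v'] _ _ /= [-> ->].
  move=> p1 p2 /allpairsPdep[a1 [[u1 v1] [Ha1 H1 ->]]] /allpairsPdep[a2 [[u2 v2] [Ha2 H2 ->]]] /=.
  move: H1 => /allpairsP [[x1 y1] [/= Hx1 Hy1 [E1 E2]]]; subst x1 y1.
  move: H2 => /allpairsP [[x2 y2] [/= Hx2 Hy2 [E1 E2]]]; subst x2 y2.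
  rewrite !mem_filter !mem_Lw in Hx1 Hy1 Hx2 Hy2.
  case/andP: Hx1 => /andP[Du1 _] /eqP Su1; case/andP: Hy1 => /andP[Dv1 _] _.
  case/andP: Hx2 => /andP[Du2 _] /eqP Su2; case/andP: Hy2 => /andP[Dv2 _] _.
  move=> E; have [Eu Ev] := @glue_inj _ _ _ _ Du1 Dv1 Du2 Dv2 E; subst u2 v2.
  have Ea : a1 = a2 by move: Su1; rewrite Su2; lia.
  by subst a2.
move=> s; rewrite /L; apply/allpairsPdep/and3P.
  move=> [a [[u v] [Ha H ->]]].
  move: H => /allpairsP [[x y] [/= Hx Hy [E1 E2]]]; subst x y.
  rewrite !mem_filter !mem_Lw in Hx Hy; rewrite mem_iota add0n in Ha.
  case/andP: Hx => /andP[Du _] /eqP Su; case/andP: Hy => /andP[Dv Tv] /eqP Sv.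
  split; last by rewrite /= trailH_glue ltnS.
    rewrite /glue size_cat /= size_cat /= Su Sv -!addnn; apply/eqP; lia.
  by apply: glue_dyck.
move=> [/eqP Ss Ds Ts].
have sn0 : s != [::] by case: s Ss {Ds Ts}.
have [u [v [Es Du Dv]]] := @decomp_ex _ Ds sn0.
have Su := @dyck_size _ Du; have Sv := @dyck_size _ Dv.
move: Ss; rewrite Es /glue size_cat /= size_cat /= Su Sv -!addnn => Ss.
exists (count id u), (u, v); split; last by [].
  by rewrite (_ : 0%N :: iota 1 n = iota 0 n.+1) // mem_iota; lia.
rewrite /PP; apply: (allpairs_f pair).
  by rewrite mem_filter Du mem_Lw Su leq0n eqxx.
rewrite /DB mem_filter Dv mem_Lw Sv -!addnn /=.
move: Ts; rewrite Es trailH_glue ltnS => -> /=.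
apply/eqP; lia.
Qed.

Section An.
Variable R : realType.
Implicit Types f h : nat -> R.

Lemma sum_widen (F : nat -> R) m n : (forall i, 0 <= F i) -> (m <= n)%N ->
  \sum_(0 <= i < m) F i <= \sum_(0 <= i < n) F i.
Proof.
move=> F0 mn; rewrite (big_cat_nat (leq0n m) mn) /= lerDl.
by apply: sumr_ge0 => i _.
Qed.

Lemma conv_tri f h N :
  \sum_(0 <= n < N) \sum_(0 <= i < n.+1) f i * h (n - i)%N =
  \sum_(0 <= i < N) \sum_(0 <= b < N - i) f i * h b.
Proof.
elim: N => [|N IH]; first by rewrite !big_geq.
rewrite big_nat_recr //= IH.
rewrite [RHS](eq_big_nat _ _ (F2 := fun i => \sum_(0 <= b < N - i) f i * h b + f i * h (N - i)%N)); last first.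
  by move=> i /andP[_ Hi] /=; rewrite subSn // big_nat_recr.
rewrite big_split /= [X in _ = X + _]big_nat_recr //= subnn (big_geq (leqnn 0%N)) addr0.
by [].
Qed.

Lemma conv_le f h N : (forall i, 0 <= f i) -> (forall i, 0 <= h i) ->
  \sum_(0 <= n < N) \sum_(0 <= i < n.+1) f i * h (n - i)%N <=
  (\sum_(0 <= i < N) f i) * (\sum_(0 <= b < N) h b).
Proof.
move=> f0 h0; rewrite conv_tri mulr_suml; apply: ler_sum_nat => i Hi.
rewrite mulr_sumr; apply: sum_widen; last by rewrite leq_subr.
by move=> b; apply: mulr_ge0.
Qed.

Lemma conv_ge f h N : (forall i, 0 <= f i) -> (forall i, 0 <= h i) ->
  (\sum_(0 <= i < N) f i) * (\sum_(0 <= b < N) h b) <=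
  \sum_(0 <= n < N.*2) \sum_(0 <= i < n.+1) f i * h (n - i)%N.
Proof.
move=> f0 h0; rewrite conv_tri mulr_suml.
apply: (@le_trans _ _ (\sum_(0 <= i < N) \sum_(0 <= b < N.*2 - i) f i * h b)).
  apply: ler_sum_nat => i /andP[_ Hi].
  rewrite mulr_sumr; apply: sum_widen; first by move=> b; apply: mulr_ge0.
  rewrite -addnn; lia.
apply: sum_widen; last by rewrite -addnn leq_addr.
by move=> i; apply: sumr_ge0 => b _; apply: mulr_ge0.
Qed.

Lemma squeeze_nd (u v : R^nat) (l : R) :
  nondecreasing_seq u -> nondecreasing_seq v -> (v @ \oo --> l)%classic ->
  (forall N, u N.+1 <= v N) -> (forall N, v N <= u (N.*2).+1) ->
  (u @ \oo --> l)%classic.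
Proof.
move=> nu nv cv uv vu.
have vl : forall N, v N <= l.
  by move=> N; rewrite -(cvg_lim (@Rhausdorff R) cv); apply: nondecreasing_cvgn_le => //; apply/cvg_ex; exists l.
have cu : cvgn u.
  apply: nondecreasing_is_cvgn => //; exists l => _ [N _ <-].
  by apply: le_trans (nu _ _ (leqnSn N)) (le_trans (uv N) (vl N)).
have H1 : limn u <= l.
  apply: limr_le => //; apply: nearW => N.
  by apply: le_trans (nu _ _ (leqnSn N)) (le_trans (uv N) (vl N)).
have H2 : l <= limn u.
  rewrite -(cvg_lim (@Rhausdorff R) cv); apply: limr_le; first by apply/cvg_ex; exists l.
  apply: nearW => N; apply: le_trans (vu N) _.
  exact: nondecreasing_cvgn_le.
have -> : l = limn u by apply/eqP; rewrite eq_le H1 H2.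
exact: cu.
Qed.

End An.

Lemma cnt0_eq1 n : cnt 0 n.+1 = cnt 1 n.+1.
Proof.
apply: eq_in_count => w; rewrite mem_Lw => /eqP Sw /=.
case Dw: (dyck w) => //=.
have wn0 : w != [::] by case: w Sw {Dw}.
have [u [v [-> _ _]]] := @decomp_ex _ Dw wn0.
by rewrite trailH_glue.
Qed.

Lemma bound_aux (R : realType) (p q t K : R) : 0 < q -> q < p -> p + q = 1 ->
  0 <= t -> p * t <= 1 -> 0 <= K -> K <= t * t -> p * (1 + p * q * K) <= 1.
Proof.
move=> q0 qp pq1 t0 pt K0 Kt.
have pt0 : 0 <= p * t by apply: mulr_ge0 => //; lra.
have h1 : p * t * (p * t) <= 1 by nra.
have h2 : p * p * q * K <= p * p * q * (t * t).
  by apply: ler_wpM2l => //; nra.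
nra.
Qed.

Lemma quad_aux (R : realType) (p q L : R) : 0 < q -> q < p -> p + q = 1 ->
  L = 1 + p * q * (L * L) -> p * L <= 1 -> L = p^-1.
Proof.
move=> q0 qp pq1 HL pL.
have pn0 : p != 0 by apply/eqP => p0; lra.
have E1 : (p * L - 1) * (q * L - 1) = p * q * (L * L) - (p + q) * L + 1 by ring.
rewrite pq1 mul1r in E1.
have E2 : (p * L - 1) * (q * L - 1) = 0 by lra.
move/eqP: E2; rewrite mulf_eq0 => /orP[|] /eqP H.
  by apply: (mulfI pn0); rewrite mulfV //; lra.
have hh : 0 <= p * q * (L * L).
  apply: mulr_ge0; [apply: mulr_ge0; lra| nra].
have L1 : 1 <= L by lra.
nra.
Qed.

Section Main.
Variable R : realType.
Variables p q : R.
Hypothesis q0 : 0 < q.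
Hypothesis qp : q < p.
Hypothesis pq1 : p + q = 1.

Local Notation x := (p * q).
Definition g j n : R := (cnt j n)%:R * x ^+ n.

Lemma x_ge0 : 0 <= x.
Proof. by apply: mulr_ge0; move: (q0) (qp) (pq1) => *; lra. Qed.

Lemma g_ge0 j n : 0 <= g j n.
Proof. by rewrite /g mulr_ge0 // exprn_ge0 // x_ge0. Qed.

Lemma g_rec j n : g j.+1 n.+1 = x * \sum_(0 <= i < n.+1) g 0 i * g j (n - i)%N.
Proof.
rewrite /g cnt_rec natr_sum mulr_suml mulr_sumr; apply: eq_big_nat => i /andP[_ Hi].
have Hi' : (i <= n)%N by rewrite -ltnS.
rewrite exprS.
have -> : x ^+ n = x ^+ i * x ^+ (n - i) by rewrite -exprD subnKC.
rewrite natrM; ring.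
Qed.

Lemma g0_rec n : g 0 n.+1 = x * \sum_(0 <= i < n.+1) g 0 i * g 0 (n - i)%N.
Proof. by rewrite -g_rec /g cnt0_eq1. Qed.

Definition T j : R^nat := fun N => \sum_(0 <= n < N) g j n.

Lemma T_ge0 j N : 0 <= T j N.
Proof. by apply: sumr_ge0 => n _; apply: g_ge0. Qed.

Lemma T_nd j : nondecreasing_seq (T j).
Proof. by apply/nondecreasing_seqP => n; rewrite /T big_nat_recr //= lerDl g_ge0. Qed.

Lemma T_rec j N : T j.+1 N.+1 =
  x * \sum_(0 <= n < N) \sum_(0 <= i < n.+1) g 0 i * g j (n - i)%N.
Proof.
rewrite /T big_nat_recl // {1}/g cnt0 /= mul0r add0r mulr_sumr.
by apply: eq_bigr => n _; rewrite g_rec.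
Qed.

Lemma T0_rec N : T 0 N.+1 =
  1 + x * \sum_(0 <= n < N) \sum_(0 <= i < n.+1) g 0 i * g 0 (n - i)%N.
Proof.
rewrite /T big_nat_recl // {1}/g cnt0 /= expr0 mulr1 mulr_sumr.
by congr (_ + _); apply: eq_bigr => n _; rewrite g0_rec.
Qed.

Lemma T0_bound N : p * T 0 N <= 1.
Proof.
elim: N => [|N IH]; first by rewrite /T big_geq // mulr0 ler01.
rewrite T0_rec.
have K0 : 0 <= \sum_(0 <= n < N) \sum_(0 <= i < n.+1) g 0 i * g 0 (n - i)%N.
  by apply: sumr_ge0 => n _; apply: sumr_ge0 => i _; apply: mulr_ge0; apply: g_ge0.
have Kle := @conv_le R (g 0) (g 0) N (g_ge0 0) (g_ge0 0).
exact: (@bound_aux R p q _ _ q0 qp pq1 (T_ge0 0 N) IH K0 Kle).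
Qed.

Lemma T0_lim : (T 0 @ \oo --> p^-1)%classic.
Proof.
have pn0 : p != 0 by apply/eqP => p0; move: (q0) (qp) (pq1) => *; lra.
have p0 : 0 < p by move: (q0) (qp) => *; lra.
have Tle : forall N, T 0 N <= p^-1.
  by move=> N; rewrite -(ler_pM2l p0) mulfV // T0_bound.
have cT : cvgn (T 0).
  by apply: nondecreasing_is_cvgn; [exact: T_nd | exists p^-1 => _ [N _ <-]].
set L := limn (T 0).
have Hsq : (T 0 @ \oo --> 1 + x * (L * L))%classic.
  apply: (@squeeze_nd R _ (fun N => 1 + x * (T 0 N * T 0 N))).
  - exact: T_nd.
  - apply/nondecreasing_seqP => n; rewrite lerD2l; apply: ler_wpM2l; first exact: x_ge0.
    by apply: ler_pM; rewrite ?T_ge0 //; apply: T_nd.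
  - apply: cvgD; first exact: cvg_cst.
    by apply: cvgMr; apply: cvgM.
  - move=> N; rewrite T0_rec lerD2l; apply: ler_wpM2l; first exact: x_ge0.
    exact: (@conv_le R (g 0) (g 0) N (g_ge0 0) (g_ge0 0)).
  - move=> N; rewrite T0_rec lerD2l; apply: ler_wpM2l; first exact: x_ge0.
    exact: (@conv_ge R (g 0) (g 0) N (g_ge0 0) (g_ge0 0)).
have HL : L = 1 + x * (L * L) by apply: (cvg_lim (@Rhausdorff R) Hsq).
have pL : p * L <= 1.
  rewrite -(mulfV pn0); apply: ler_wpM2l; first exact: ltW.
  by apply: limr_le => //; apply: nearW => N.
have <- : L = p^-1 by exact (@quad_aux R p q L q0 qp pq1 HL pL).
exact: cT.
Qed.

Lemma T_lim j : (T j @ \oo --> q ^+ j / p)%classic.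
Proof.
have pn0 : p != 0 by apply/eqP => p0; move: (q0) (qp) (pq1) => *; lra.
elim: j => [|j IH]; first by rewrite expr0 mul1r; exact: T0_lim.
have -> : q ^+ j.+1 / p = x * (p^-1 * (q ^+ j / p)).
  by rewrite exprS; field.
apply: (@squeeze_nd R _ (fun N => x * (T 0 N * T j N))).
- exact: T_nd.
- apply/nondecreasing_seqP => n; apply: ler_wpM2l; first exact: x_ge0.
  by apply: ler_pM; rewrite ?T_ge0 //; apply: T_nd.
- by apply: cvgMr; apply: cvgM => //; exact: T0_lim.
- move=> N; rewrite T_rec; apply: ler_wpM2l; first exact: x_ge0.
  exact: (@conv_le R (g 0) (g j) N (g_ge0 0) (g_ge0 j)).
- move=> N; rewrite T_rec; apply: ler_wpM2l; first exact: x_ge0.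
  exact: (@conv_ge R (g 0) (g j) N (g_ge0 0) (g_ge0 j)).
Qed.

Lemma mass_all n : cyc_mass p q (fun _ => true) n = q ^+ 2 * p * g 0 n.
Proof.
rewrite /cyc_mass (@sum_tuple R n.*2 (fun s => dyck s && true)) /g /cnt.
rewrite -mulr_natr (@eq_count _ _ (fun w => dyck w && (0 <= trailH w)%N)); last first.
  by move=> w /=; rewrite andbT.
ring.
Qed.

Lemma count_split j n : cnt j n =
  (count (fun s => dyck s && (trailH (cycle_SS s) == j.+1)) (Lw n.*2) + cnt j.+1 n)%N.
Proof.
rewrite /cnt; elim: (Lw n.*2) => //= w s IH.
rewrite IH (trailH_glue [:: true] w) eqSS.
case: (dyck w) => /=; last by rewrite !add0n.
case: ltngtP => H /=; lia.
Qed.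

Lemma mass_k k n : cyc_mass p q (fun c => trailH c == k.+1) n = q ^+ 2 * p * (g k n - g k.+1 n).
Proof.
rewrite /cyc_mass (@sum_tuple R n.*2 (fun s => dyck s && (trailH (cycle_SS s) == k.+1))) /g.
rewrite (count_split k n) natrD.
rewrite -mulr_natr; ring.
Qed.

End Main.


Theorem lemma3 (R : realType) (p q : R) (k : nat) :
  0 < q -> q < p -> p + q = 1 -> (1 <= k)%N ->
  prob_SS p q (fun c => trailH c == k) / prob_SS p q (fun _ => true)
  = p * q ^+ k.-1.
Proof.
move=> q0 qp pq1; case: k => [//|k] _ /=.
have pn0 : p != 0 by apply/eqP => p0; lra.
have qn0 : q != 0 by apply/eqP => p0; lra.
have E1 : prob_SS p q (fun c => trailH c == k.+1) = q ^+ 2 * p * (q ^+ k / p - q ^+ k.+1 / p).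
  rewrite /prob_SS.
  have -> : series (cyc_mass p q (fun c => trailH c == k.+1)) =
      (fun N => q ^+ 2 * p * (@T R p q k N - @T R p q k.+1 N)).
    apply/funext => N; rewrite /series /= /T.
    rewrite (eq_bigr _ (fun n _ => @mass_k R p q q0 qp k n)).
    by rewrite -mulr_sumr sumrB.
  apply: cvg_lim; first exact: Rhausdorff.
  by apply: cvgMr; apply: cvgB; apply: T_lim.
have E2 : prob_SS p q (fun _ => true) = q ^+ 2 * p * (q ^+ 0 / p).
  rewrite /prob_SS.
  have -> : series (cyc_mass p q (fun _ => true)) = (fun N => q ^+ 2 * p * @T R p q 0 N).
    apply/funext => N; rewrite /series /= /T.
    rewrite (eq_bigr _ (fun n _ => @mass_all R p q n)).
    by rewrite -mulr_sumr.
  apply: cvg_lim; first exact: Rhausdorff.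
  by apply: cvgMr; apply: T_lim.
rewrite E1 E2.
have -> : p = 1 - q by lra.
rewrite (exprS q k) expr0; move: (q ^+ k) => y.
have h1 : 1 - q != 0 by apply/eqP; lra.
by field; rewrite h1 qn0.
Qed.
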